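(* Let $L$ be a finite lattice. If $L$ is shellable, then its facet adjacency graph $FA(L)$ does not have two disjoint source sets.
   Context: The order complex of $L$ has the chains of $L$ as faces; $L$ is shellable if its facets (maximal chains) admit a linear order $F_1,\dots,F_k$ such that for each $j<k$, $\big(\bigcup_{i\le j}\langle F_i\rangle\big)\cap\langle F_{j+1}\rangle$ is pure of dimension $|F_{j+1}|-2$, with $\langle F\rangle$ the set of subsets of $F$. The facet adjacency graph $FA(L)$ is the directed graph whose vertices are the maximal chains of $L$, with an edge $F\to G$ whenever $|F\cap G|=|G|-1$. A source set of a directed graph with vertex set $V$ is a nonempty proper subset $X\subsetneq V$ such that there is no edge $y\to x$ with $y\notin X$ and $x\in X$. *)

(* Defs.v *)
From HB Require Import structures.
From mathcomp Require Import all_boot all_order.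
Set Implicit Arguments. Unset Strict Implicit. Unset Printing Implicit Defensive.
Import Order.LTheory.
Local Open Scope order_scope.

Section Defs.
Context {d : Order.disp_t} {L : finLatticeType d}.

Definition is_chain (A : {set L}) : bool :=
  [forall x in A, forall y in A, (x <= y) || (y <= x)].

(* Facets of the order complex = maximal chains (w.r.t. inclusion). *)
Definition maximal_chain (A : {set L}) : bool :=
  is_chain A && [forall B : {set L}, (is_chain B && (A \subset B)) ==> (B == A)].

(* Pure simplicial complex (given as a predicate on faces) whose maximal
   faces all have exactly n vertices (i.e. dimension n - 1). *)
Definition pure_of_size (C : pred {set L}) (n : nat) : Prop :=
  forall S, C S -> (forall S', C S' -> S \subset S' -> S' = S) -> #|S| = n.

(* (U_{i <= j} <F_i>) ∩ <F_{j+1}>, with facets F_1,...,F_k listed (0-indexed) in s *)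
Definition shell_complex (s : seq {set L}) (j : nat) : pred {set L} :=
  fun S => (S \subset nth set0 s j.+1) && has (fun F : {set L} => S \subset F) (take j.+1 s).

Definition shelling (s : seq {set L}) : Prop :=
  [/\ uniq s,
      (forall F, F \in s <-> maximal_chain F) &
      forall j, (j.+1 < size s)%N ->
        pure_of_size (shell_complex s j) (#|nth set0 s j.+1|.-1)].

Definition shellable : Prop := exists s, shelling s.

Definition FA_edge (F G : {set L}) : bool :=
  [&& maximal_chain F, maximal_chain G & #|F :&: G|.+1 == #|G|].

Definition source_set (X : {set {set L}}) : Prop :=
  [/\ (forall F, F \in X -> maximal_chain F),
      X != set0,
      (exists F, maximal_chain F && (F \notin X)) &
      forall y x, x \in X -> y \notin X -> ~~ FA_edge y x].

End Defs.

(* Main.v *)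
Require Import Defs.
From HB Require Import structures.
From mathcomp Require Import all_boot all_order.
From mathcomp Require Import zify.

Section Aux.
Variables (d : Order.disp_t) (L : finLatticeType d).

Lemma adj_before (s : seq {set L}) j : shelling s -> (j.+1 < size s)%N ->
  exists2 i, (i < j.+1)%N & FA_edge (nth set0 s i) (nth set0 s j.+1).
Proof.
case=> us hs hp hj.
set Fn := nth set0 s j.+1.
have C0 : shell_complex s j set0.
  rewrite /shell_complex sub0set /=; apply/hasP; exists (nth set0 s 0); last first.
    exact: sub0set.
  rewrite -(nth_take set0 (ltn0Sn j)); apply: mem_nth.
  rewrite size_take; case: ifP => // _; move: hj; case: (size s) => //.
case: (arg_maxnP (fun S : {set L} => #|S|) C0) => S CS maxS.
have pS : #|S| = #|Fn|.-1.
  apply: (hp j hj S CS) => S' CS' sub.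
  by apply/eqP; rewrite eq_sym eqEcard sub; exact: maxS.
move/andP: CS => [SFn /hasP [F Ftake SF]].
have Fs : F \in s := mem_take Ftake.
have mF : maximal_chain F by apply/hs.
have mFn : maximal_chain Fn by apply/hs; rewrite /Fn mem_nth.
have ltI : (#|F :&: Fn| < #|Fn|)%N.
  apply: proper_card; rewrite properEneq subsetIr andbT.
  apply/negP => /eqP /setIidPr FnF.
  move/andP: mFn => [_ /forallP /(_ F)].
  move/andP: mF => [cF _]; rewrite cF FnF /= => /eqP EF.
  have : nth set0 (drop j.+1 s) 0 \in drop j.+1 s.
    by apply: mem_nth; rewrite size_drop subn_gt0.
  rewrite nth_drop addn0 -/Fn.
  move: us; rewrite -{1}(cat_take_drop j.+1 s) cat_uniq => /and3P [_ /hasPn H _].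
  by move/H; rewrite -EF Ftake.
have geI : (#|S| <= #|F :&: Fn|)%N by apply: subset_leq_card; rewrite subsetI SF.
exists (index F s).
  rewrite -{1}(cat_take_drop j.+1 s) index_cat Ftake.
  have := index_mem F (take j.+1 s); by rewrite Ftake size_take hj.
rewrite /FA_edge nth_index // mF mFn /=; apply/eqP.
move: ltI geI; rewrite pS; move: #|F :&: Fn| #|Fn| => a b; lia.
Qed.

Lemma first_in (s : seq {set L}) (X : {set {set L}}) :
  shelling s -> source_set X -> nth set0 s 0 \in X.
Proof.
move=> sh [hX X0 _ hE].
have [F FX] := set0Pn _ X0.
have Fs : F \in s by case: sh => _ hs _; apply/hs; apply: hX.
have : (index F s < size s)%N by rewrite index_mem.
have : nth set0 s (index F s) \in X by rewrite nth_index.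
move: (index F s) => n.
elim: n {-2}n (leqnn n) => [|N IH] n ltn; first by case: n ltn.
case: n ltn => [//|j] ltn nX ltS.
have [i lti edge] := adj_before s j sh ltS.
apply: (IH i); [lia| |lia].
apply/negPn/negP => iX.
by move: (hE _ _ nX iX); rewrite edge.
Qed.
End Aux.


Theorem lemma3p30 (d : Order.disp_t) (L : finLatticeType d) :
  @shellable d L ->
  ~ (exists X Y : {set {set L}},
        source_set X /\ source_set Y /\ [disjoint X & Y]).
Proof.
move=> [s sh] [X [Y [sX [sY dXY]]]].
have hX := first_in _ _ _ _ sh sX; have hY := first_in _ _ _ _ sh sY.
by move: dXY; rewrite disjoint_sym disjoint_subset => /subsetP /(_ _ hY); rewrite inE hX.
Qed.
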